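(* Let $M$ be a $0/1$-matrix, let $B$ be a block of $M$, and let $i,j$ be two entries of the input boundary $B^-$ with $i<j$ (in the input-boundary order). Let $\sigma(i)$ be an entry of the output boundary $B^+$ that is reachable from $i$, and let $\sigma(j)$ be an entry of $B^+$ that is reachable from $j$. If $\sigma(j)<\sigma(i)$ (in the output-boundary order), then $\sigma(j)$ is also reachable from $i$ and $\sigma(i)$ is also reachable from $j$.
   Context: Let $M$ be an $m\times n$ $0/1$-matrix with entries indexed $(r,s)$, $1\le r\le m$ (rows, thought of as increasing from bottom to top), $1\le s\le n$ (columns, increasing from left to right). A path from $(k,l)$ to $(i,j)$ is a sequence of $1$-entries starting at $(k,l)$ and ending at $(i,j)$ in which each step goes from $(r,s)$ to $(r+1,s)$, $(r,s+1)$ or $(r+1,s+1)$; $(i,j)$ is reachable from $(k,l)$ if such a path exists. A block $B$ is the submatrix formed by a contiguous range of rows $r^-\le r\le r^+$ and a contiguous range of columns $s^-\le s\le s^+$. Its input boundary $B^-$ consists of the entries in row $r^-$ or column $s^-$ of $B$, ordered as follows: first the entries of row $r^-$ from column $s^+$ down to column $s^-$, then the remaining entries of column $s^-$ from row $r^-+1$ up to $r^+$. Its output boundary $B^+$ consists of the entries in row $r^+$ or column $s^+$ of $B$, ordered as follows: first the entries of column $s^+$ from row $r^-$ up to row $r^+$, then the remaining entries of row $r^+$ from column $s^+-1$ down to $s^-$. *)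

(* Defs.v *)
From mathcomp Require Import all_boot all_algebra.
Set Implicit Arguments. Unset Strict Implicit. Unset Printing Implicit Defensive.

(* Entries of an m x n matrix are pairs (r, s) of ordinals; rows/columns are
   0-based here (the paper's row r corresponds to ordinal r-1). Rows increase
   "upwards", columns increase to the right. *)
Definition entry (m n : nat) := ('I_m * 'I_n)%type.

Section Defs.
Variables (m n : nat) (M : 'M[bool]_(m, n)).

Definition step (a b : entry m n) : bool :=
  [|| (b.1 == a.1.+1 :> nat) && (b.2 == a.2 :> nat),
      (b.1 == a.1 :> nat) && (b.2 == a.2.+1 :> nat)
    | (b.1 == a.1.+1 :> nat) && (b.2 == a.2.+1 :> nat)].

Definition is_one (a : entry m n) : bool := M a.1 a.2.

Definition reachable (x y : entry m n) : Prop :=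
  exists s : seq (entry m n),
    [&& path step x s, last x s == y & all is_one (x :: s)].
End Defs.

Record block := Block { rlo : nat; rhi : nat; slo : nat; shi : nat }.

Definition valid_block (m n : nat) (B : block) : Prop :=
  rlo B <= rhi B < m /\ slo B <= shi B < n.

Definition in_block m n (B : block) (a : entry m n) : bool :=
  (rlo B <= a.1 <= rhi B) && (slo B <= a.2 <= shi B).

Definition in_input m n (B : block) (a : entry m n) : bool :=
  in_block B a && ((a.1 == rlo B :> nat) || (a.2 == slo B :> nat)).

Definition in_output m n (B : block) (a : entry m n) : bool :=
  in_block B a && ((a.1 == rhi B :> nat) || (a.2 == shi B :> nat)).

(* position in the order of B^-: first row rlo from column shi down to slo,
   then column slo from row rlo+1 up to rhi *)
Definition input_rank m n (B : block) (a : entry m n) : nat :=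
  if a.1 == rlo B :> nat then shi B - a.2
  else (shi B - slo B) + (a.1 - rlo B).

(* position in the order of B^+: first column shi from row rlo up to rhi,
   then row rhi from column shi-1 down to slo *)
Definition output_rank m n (B : block) (a : entry m n) : nat :=
  if a.2 == shi B :> nat then a.1 - rlo B
  else (rhi B - rlo B) + (shi B - a.2).

(* Main.v *)
Require Import Defs.
From mathcomp Require Import all_boot all_algebra.
From mathcomp Require Import zify.
Set Implicit Arguments. Unset Strict Implicit.

Section Aux.
Variables (m n : nat).
Implicit Types (a b p q r x y z : entry m n) (s t : seq (entry m n)).

Lemma stepP a b : step a b ->
  [/\ a.1 <= b.1 <= a.1.+1, a.2 <= b.2 <= a.2.+1 & (b.2 == a.2 :> nat) ==> (b.1 == a.1.+1 :> nat)].
Proof. by rewrite /step => /or3P [] /andP [] /eqP H1 /eqP H2; split; lia. Qed.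

Lemma le_last p s z : path (@step m n) p s -> z \in p :: s ->
  (z.1 <= (last p s).1) && (z.2 <= (last p s).2).
Proof.
elim: s p z => [|q s IH] p z /=.
  by move=> _; rewrite inE => /eqP ->; rewrite !leqnn.
move=> /andP [st ps]; rewrite inE => /orP [/eqP ->|zin]; last exact: IH.
have := IH q q ps (mem_head _ _); case/stepP: st => h1 h2 h3 h4; lia.
Qed.

Definition Tp P y := has (fun z : entry m n => (z.1 <= y.1) && (y.2 < z.2)) P.
Definition Vp P y := has (fun z : entry m n => (z.1 <= y.1) && (y.2 <= z.2)) P.

Lemma lift3 p t y L (f : pred (entry m n)) :
  [|| y \in t, has f t | L] -> [|| y \in p :: t, has f (p :: t) | L].
Proof. by rewrite /= inE; case/or3P=> ->; rewrite !orbT. Qed.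

Lemma colA p s q y : path (@step m n) p s -> q \in p :: s -> q.1 <= y.1 -> q.2 = y.2 :> nat ->
  [|| y \in p :: s, Tp (p :: s) y |
      ((last p s).2 == y.2 :> nat) && ((last p s).1 < y.1)].
Proof.
elim: s p q => [|r s IH] p q /=.
  move=> _; rewrite inE => /eqP -> h1 h2.
  case: (ltnP p.1 y.1) => h3.
    by apply/orP; right; apply/orP; right; apply/andP; split => //; apply/eqP.
  have -> : p = y.
    case: p y h1 h2 h3 => [p1 p2] [y1 y2] /= h1 h2 h3.
    have e1 : p1 = y1 by apply: val_inj; rewrite /=; lia.
    have e2 : p2 = y2 by apply: val_inj.
    by rewrite e1 e2.
  by rewrite mem_head.
move=> /andP [st ps]; rewrite inE => /orP [/eqP ->|qin] h1 h2; last first.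
  exact: lift3 (IH r q ps qin h1 h2).
case: (eqVneq p y) => [->|pny]; first by rewrite mem_head.
have py : p.1 < y.1.
  case: (ltnP p.1 y.1) => // h3; exfalso; move/eqP: pny; apply.
  case: p y h1 h2 h3 {st IH} => [p1 p2] [y1 y2] /= h1 h2 h3.
  have e1 : p1 = y1 by apply: val_inj; rewrite /=; lia.
  have e2 : p2 = y2 by apply: val_inj.
  by rewrite e1 e2.
case/stepP: st => /andP [a1 a2] /andP [a3 a4] a5.
case: (eqVneq (r.2 : nat) p.2) => e.
  apply: lift3; apply: (IH r r ps (mem_head _ _)); lia.
apply/or3P; apply: Or32; rewrite /Tp /=; apply/orP; right; apply/orP; left.
apply/andP; split; lia.
Qed.

Lemma K i sP y : path (@step m n) i sP -> Vp (i :: sP) y -> y \notin i :: sP ->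
  ~~ (((last i sP).2 == y.2 :> nat) && ((last i sP).1 < y.1)) ->
  Tp (i :: sP) y.
Proof.
move=> pP /hasP [q qin /andP [h1 h2]] yn nb.
case: (ltnP y.2 q.2) => h3.
  by apply/hasP; exists q => //; rewrite h1 h3.
have e : q.2 = y.2 :> nat.
  by apply/eqP; rewrite eqn_leq h3 h2.
case/or3P: (colA pP qin h1 e) => [H|//|H]; [by move: yn; rewrite H | by move: nb; rewrite H].
Qed.

Lemma alongQ i sP x t : path (@step m n) i sP -> path (@step m n) x t ->
  (forall y, y \in x :: t -> (y \notin i :: sP) &&
     ~~ (((last i sP).2 == y.2 :> nat) && ((last i sP).1 < y.1))) ->
  Vp (i :: sP) x -> Tp (i :: sP) (last x t).
Proof.
move=> pP; elim: t x => [|y t IH] x /= pQ H V.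
  by case/andP: (H x (mem_head _ _)) => h1 h2; apply: K.
case/andP: pQ => st pQ.
case/andP: (H x (mem_head _ _)) => h1 h2.
have /hasP [q qin /andP [k1 k2]] := K pP V h1 h2.
apply: IH => //.
  by move=> z zin; apply: H; rewrite inE zin orbT.
apply/hasP; exists q => //; case/stepP: st => a1 a2 a3; apply/andP; split; lia.
Qed.

Lemma reach_split (M : 'M[bool]_(m, n)) a s x :
  path (@step m n) a s -> all (is_one M) (a :: s) -> x \in a :: s ->
  reachable M a x /\ reachable M x (last a s).
Proof.
move=> pa al; rewrite inE => /orP [/eqP ->|xin].
  by split; [exists [::]; rewrite /= eqxx /= andbT; case/andP: al | exists s; rewrite pa eqxx al].
case/splitPr: xin pa al => s1 s2.
rewrite cat_path last_cat /= => /and3P [p1 st p2] al.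
move: al; rewrite /= all_cat /= => /and4P [a0 a1 ax a2].
split.
  exists (rcons s1 x); rewrite rcons_path p1 st last_rcons eqxx /=.
  by rewrite a0 -cats1 all_cat a1 /= ax.
by exists s2; rewrite p2 eqxx /= ax a2.
Qed.

Lemma reach_trans (M : 'M[bool]_(m, n)) a b c :
  reachable M a b -> reachable M b c -> reachable M a c.
Proof.
move=> [s1 /and3P [p1 /eqP l1 a1]] [s2 /and3P [p2 /eqP l2 a2]].
exists (s1 ++ s2); rewrite cat_path l1 p1 p2 last_cat l1 l2 eqxx /=.
move: a1 a2; rewrite /= all_cat => /andP [-> ->] /andP [_ ->] //.
Qed.

End Aux.

Lemma ifeq (b:bool) (x y : nat) :
  (b /\ (if b then x else y) = x) \/ (~~ b /\ (if b then x else y) = y).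
Proof. by case: b; [left|right]. Qed.

Theorem mainTheorem3 (m n : nat) (M : 'M[bool]_(m, n)) (B : block)
  (i j si sj : entry m n) :
  valid_block m n B ->
  in_input B i -> in_input B j ->
  input_rank B i < input_rank B j ->
  in_output B si -> reachable M i si ->
  in_output B sj -> reachable M j sj ->
  output_rank B sj < output_rank B si ->
  reachable M i sj /\ reachable M j si.
Proof.
move=> vB iI jI rij oi [sP /and3P [pP /eqP lP aP]] oj [sQ /and3P [pQ /eqP lQ aQ]] rs.
move: vB iI jI rij oi oj rs; rewrite /valid_block /in_input /in_output /in_block
  /input_rank /output_rank => vB iI jI rij oi oj rs.
have F1 := ifeq (i.1 == rlo B :> nat) (shi B - i.2) (shi B - slo B + (i.1 - rlo B)).
have F2 := ifeq (j.1 == rlo B :> nat) (shi B - j.2) (shi B - slo B + (j.1 - rlo B)).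
have F3 := ifeq (si.2 == shi B :> nat) (si.1 - rlo B) (rhi B - rlo B + (shi B - si.2)).
have F4 := ifeq (sj.2 == shi B :> nat) (sj.1 - rlo B) (rhi B - rlo B + (shi B - sj.2)).
move: F1 F2 F3 F4 rij rs.
set R1 := (if i.1 == rlo B :> nat then _ else _).
set R2 := (if j.1 == rlo B :> nat then _ else _).
set R3 := (if si.2 == shi B :> nat then _ else _).
set R4 := (if sj.2 == shi B :> nat then _ else _).
move=> F1 F2 F3 F4 rij rs.
move: iI jI oi oj vB => /andP [/and3P [/andP [i1 i2] i3 i4] /orP i5]
  /andP [/and3P [/andP [j1 j2] j3 j4] /orP j5]
  /andP [/and3P [/andP [k1 k2] k3 k4] /orP k5]
  /andP [/and3P [/andP [l1 l2] l3 l4] /orP l5] [/andP [v1 v2] /andP [v3 v4]].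
case: (boolP (has (mem (i :: sP)) (j :: sQ))) => [/hasP [x xQ xP]|].
  have [r1 r2] := reach_split pP aP xP.
  have [r3 r4] := reach_split pQ aQ xQ.
  rewrite lP in r2; rewrite lQ in r4.
  split; [exact: reach_trans r1 r4 | exact: reach_trans r3 r2].
move/hasPn => nin; exfalso.
have V : Vp (i :: sP) j.
  rewrite /Vp /= ; apply/orP; left; apply/andP. clear -i1 i2 i3 i4 i5 j1 j2 j3 j4 j5 F1 F2 rij. Time (split; lia).
have H : forall y, y \in j :: sQ -> (y \notin i :: sP) &&
     ~~ (((last i sP).2 == y.2 :> nat) && ((last i sP).1 < y.1)).
  move=> y yin; rewrite (nin y yin) /= lP.
  have := le_last pQ yin; rewrite lQ => /andP [b1 b2].
  apply/negP => /andP [/eqP c1 c2]; clear -b1 b2 c1 c2 k1 k2 k3 k4 k5 l1 l2 l3 l4 l5 F3 F4 rs; lia.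
have /hasP [q qin /andP [q1 q2]] := alongQ pP pQ H V.
have := le_last pP qin; rewrite lP lQ in q1 q2 * => /andP [b1 b2].
clear -q1 q2 b1 b2 k1 k2 k3 k4 k5 l1 l2 l3 l4 l5 F3 F4 rs. Time lia.
Qed.
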